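(* Let $A\in\mathbb{R}^{n\times m}$, $B\in\mathbb{R}_+^{n\times k}$ and $C\in\mathbb{R}_+^{k\times m}$ be such that $B\boxtimes C$ is dominated by $A$, i.e. $(B\boxtimes C)_{ij}\le A_{ij}$ for all $i\in[n]$, $j\in[m]$. Then $s(B)+s(C)\ge s(A)$.
   Context: $\mathbb{R}_+=[0,\infty)$ and $[n]=\{1,\dots,n\}$. The max-times product is $(B\boxtimes C)_{ij}=\max_{s=1}^{k} B_{is}C_{sj}$. For a $p\times q$ matrix $X$, its sparsity is $s(X)=\frac{pq-\mathrm{nnz}(X)}{pq}$, where $\mathrm{nnz}(X)$ is the number of nonzero entries of $X$. *)

(* Defs.v *)
From HB Require Import structures.
From mathcomp Require Import all_boot all_order all_algebra.
Set Implicit Arguments. Unset Strict Implicit. Unset Printing Implicit Defensive.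
Import Order.TTheory GRing.Theory Num.Theory.
Local Open Scope ring_scope.

(* Max-times product: (B ⊠ C)_ij = max_{s in [k]} B_is * C_sj.
   The fold starts from 0; for nonnegative entries and k >= 1 this is
   exactly the max over s. *)
Definition maxtimes (R : realFieldType) (n k m : nat)
  (B : 'M[R]_(n, k)) (C : 'M[R]_(k, m)) : 'M[R]_(n, m) :=
  \matrix_(i < n, j < m) \big[Num.max/0]_(s < k) (B i s * C s j).

Definition nnz (R : realFieldType) (p q : nat) (X : 'M[R]_(p, q)) : nat :=
  #|[set ij : 'I_p * 'I_q | X ij.1 ij.2 != 0]|.

Definition sparsity (R : realFieldType) (p q : nat) (X : 'M[R]_(p, q)) : R :=
  (((p * q)%:R - (nnz X)%:R) / (p * q)%:R).

(* Main.v *)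
Require Import Defs.
From HB Require Import structures.
From mathcomp Require Import all_boot all_order all_algebra.
From mathcomp Require Import zify ring lra.
Import Order.TTheory GRing.Theory Num.Theory.
Local Open Scope ring_scope.

Lemma nnz_sum (R : realFieldType) (p q : nat) (X : 'M[R]_(p, q)) :
  nnz X = (\sum_(i < p) \sum_(j < q) (X i j != 0%R : nat))%N.
Proof.
rewrite /nnz pair_bigA /= -sum1_card big_mkcond /=.
by apply: eq_bigr => ij _; rewrite inE; case: (X _ _ != 0).
Qed.

Lemma le_bigmax_seq (R : realFieldType) (I : eqType) (r : seq I) (F : I -> R) x :
  x \in r -> F x <= \big[Num.max/0]_(i <- r) F i.
Proof.
elim: r => [|y r IH] //; rewrite in_cons big_cons le_max => /orP [/eqP->|H].
  by rewrite lexx.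
by rewrite IH // orbT.
Qed.

Lemma le_bigmax_ord (R : realFieldType) k (F : 'I_k -> R) s :
  F s <= \big[Num.max/0]_(i < k) F i.
Proof. by rewrite -big_enum /=; apply: le_bigmax_seq; rewrite mem_enum. Qed.

Theorem theorem3 (R : realFieldType) (n m k : nat)
  (A : 'M[R]_(n, m)) (B : 'M[R]_(n, k)) (C : 'M[R]_(k, m)) :
  (0 < n)%N -> (0 < m)%N -> (0 < k)%N ->
  (forall i s, 0 <= B i s) -> (forall s j, 0 <= C s j) ->
  (forall i j, maxtimes B C i j <= A i j) ->
  sparsity A <= sparsity B + sparsity C.
Proof.
move=> n0 m0 k0 B0 C0 HA.
pose r s := (\sum_(i < n) (B i s != 0%R : nat))%N.
pose c s := (\sum_(j < m) (C s j != 0%R : nat))%N.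
have Hrc s : (r s * c s <= nnz A)%N.
  rewrite nnz_sum /r /c big_distrl /=; apply: leq_sum => i _.
  rewrite big_distrr /=; apply: leq_sum => j _.
  case: eqP => [_|/eqP Bn]; first by [].
  case: eqP => [_|/eqP Cn]; first by rewrite muln0.
  rewrite muln1 lt0b; apply/negP => /eqP A0.
  have : B i s * C s j <= A i j.
    apply: le_trans (HA i j); rewrite /maxtimes mxE.
    exact: (@le_bigmax_ord R k (fun s => B i s * C s j)).
  rewrite A0 => H.
  have : 0 < B i s * C s j by rewrite mulr_gt0 // lt0r ?Bn ?Cn ?B0 ?C0.
  by rewrite ltNge H.
have Hr s : (r s <= n)%N.
  rewrite -[X in (_ <= X)%N]card_ord -sum1_card; apply: leq_sum => i _; by case: (_ != 0).
have Hc s : (c s <= m)%N.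
  rewrite -[X in (_ <= X)%N]card_ord -sum1_card; apply: leq_sum => i _; by case: (_ != 0).
have Hs s : (r s * m + c s * n <= n * m + nnz A)%N.
  have := Hrc s; have := Hr s; have := Hc s; nia.
have Hb : nnz B = (\sum_s r s)%N by rewrite nnz_sum exchange_big.
have Hcc : nnz C = (\sum_s c s)%N by rewrite nnz_sum.
have Hsum : (nnz B * m + nnz C * n <= k * (n * m + nnz A))%N.
  rewrite Hb Hcc !big_distrl /= -big_split /=.
  rewrite -[X in (_ <= X * _)%N]card_ord -sum1_card big_distrl /=.
  by apply: leq_sum => s _; rewrite mul1n.
have HsumR : (nnz B)%:R * m%:R + (nnz C)%:R * n%:R <= k%:R * (n%:R * m%:R + (nnz A)%:R) :> R.
  have e1 : (k * (n * m + nnz A))%:R = k%:R * (n%:R * m%:R + (nnz A)%:R) :> R by rewrite natrM natrD natrM.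
  have e2 : (nnz B * m + nnz C * n)%:R = (nnz B)%:R * m%:R + (nnz C)%:R * n%:R :> R by rewrite natrD !natrM.
  by rewrite -e1 -e2 ler_nat.
rewrite /sparsity -subr_ge0.
have nR : n%:R != 0 :> R by rewrite pnatr_eq0 -lt0n.
have mR : m%:R != 0 :> R by rewrite pnatr_eq0 -lt0n.
have kR : k%:R != 0 :> R by rewrite pnatr_eq0 -lt0n.
rewrite !natrM.
set a := (nnz A)%:R; set b := (nnz B)%:R; set cc := (nnz C)%:R.
set N := n%:R; set M := m%:R; set K := k%:R.
have -> : (N * K - b) / (N * K) + (K * M - cc) / (K * M) - (N * M - a) / (N * M)
   = (K * (N * M + a) - (b * M + cc * N)) / (N * M * K).
  by field; rewrite kR mR nR.
apply: divr_ge0; first by rewrite subr_ge0.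
by rewrite !mulr_ge0 // ler0n.
Qed.
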